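(* Let $R$ be a Noetherian ring, $A$ an $R$-module and $B$ an $R$-submodule of $A$. If $\mathrm{sr}_R(B)$ and $\mathrm{sr}_R(A/B)$ are finite, then $\mathrm{sr}_R(A)\le\mathrm{sr}_R(B)+\mathrm{sr}_R(A/B)$.
   Context: A generating subset of an $R$-submodule is minimal if no proper subset of it generates that submodule. An $R$-module $M$ has special rank $\mathrm{sr}_R(M)=r$ if every finitely generated $R$-submodule of $M$ can be generated by $r$ elements and some finitely generated $R$-submodule of $M$ has a minimal generating subset of exactly $r$ elements. *)

(* Defs.v *)
From HB Require Import structures.
From mathcomp Require Import all_boot all_order all_algebra.
Set Implicit Arguments. Unset Strict Implicit. Unset Printing Implicit Defensive.
Import GRing.Theory.
Local Open Scope ring_scope.

Definition is_left_ideal (R : nzRingType) (I : R -> Prop) : Prop :=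
  I 0 /\ (forall x y, I x -> I y -> I (x + y)) /\ (forall a x, I x -> I (a * x)).
Definition is_right_ideal (R : nzRingType) (I : R -> Prop) : Prop :=
  I 0 /\ (forall x y, I x -> I y -> I (x + y)) /\ (forall a x, I x -> I (x * a)).

Definition noetherian_ring (R : nzRingType) : Prop :=
  (forall I : R -> Prop, is_left_ideal I ->
     exists s : seq R, forall x, I x <->
       exists c : 'I_(size s) -> R, x = \sum_(i < size s) c i * s`_i) /\
  (forall I : R -> Prop, is_right_ideal I ->
     exists s : seq R, forall x, I x <->
       exists c : 'I_(size s) -> R, x = \sum_(i < size s) s`_i * c i).

Definition is_submod (R : nzRingType) (V : lmodType R) (N : V -> Prop) : Prop :=
  N 0 /\ (forall x y, N x -> N y -> N (x + y)) /\ (forall a x, N x -> N (a *: x)).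

Definition gen (R : nzRingType) (V : lmodType R) (s : seq V) (v : V) : Prop :=
  exists c : 'I_(size s) -> R, v = \sum_(i < size s) c i *: s`_i.

Definition same_gen (R : nzRingType) (V : lmodType R) (s t : seq V) : Prop :=
  forall v, gen t v <-> gen s v.

(* has_sr M r : the submodule M (viewed as an R-module) has special rank r:
   every finitely generated submodule of M (= generated by a finite list of
   elements of M) can be generated by r elements, and some finitely generated
   submodule of M has a minimal generating subset of exactly r elements. *)
Definition has_sr (R : nzRingType) (V : lmodType R) (M : V -> Prop) (r : nat) : Prop :=
  (forall s : seq V, (forall x, x \in s -> M x) ->
     exists t : seq V, size t = r /\ same_gen s t) /\
  (exists s : seq V, [/\ uniq s, size s = r, (forall x, x \in s -> M x) &
     forall t : seq V, {subset t <= s} -> ~ {subset s <= t} -> ~ same_gen s t]).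

(* Main.v *)
Require Import Defs.
From mathcomp Require Import all_boot all_order all_algebra.
From Stdlib Require Import Classical.
Set Implicit Arguments. Unset Strict Implicit. Unset Printing Implicit Defensive.
Import GRing.Theory.
Local Open Scope ring_scope.

Section Gen.
Variables (R : nzRingType) (V : lmodType R).

Definition genf (s : seq V) (v : V) : Prop :=
  exists c : nat -> R, v = \sum_(i < size s) c i *: s`_i.

Lemma genE s v : gen s v <-> genf s v.
Proof.
split.
- case=> c ->; exists (fun k => oapp c 0 (insub k)).
  by apply: eq_bigr => i _; rewrite valK.
- by case=> c ->; exists (fun i => c i).
Qed.

Lemma genf0 s : genf s 0.
Proof. by exists (fun _ => 0); rewrite big1 // => i _; rewrite scale0r. Qed.

Lemma genfD s x y : genf s x -> genf s y -> genf s (x + y).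
Proof.
case=> c1 -> [c2 ->]; exists (fun i => c1 i + c2 i).
by rewrite -big_split; apply: eq_bigr => i _; rewrite scalerDl.
Qed.

Lemma genfZ s a x : genf s x -> genf s (a *: x).
Proof.
case=> c ->; exists (fun i => a * c i).
by rewrite scaler_sumr; apply: eq_bigr => i _; rewrite scalerA.
Qed.

Lemma genfB s x y : genf s x -> genf s y -> genf s (x - y).
Proof. by move=> hx hy; apply: genfD hx _; rewrite -scaleN1r; apply: genfZ. Qed.

Lemma sum_delta (W : nmodType) n (i : nat) (F : nat -> W) : (i < n)%N ->
  \sum_(j < n) (if (j : nat) == i then F j else 0) = F i.
Proof.
move=> lt; rewrite (bigD1 (Ordinal lt)) //= eqxx big1 ?addr0 // => j nj.
by case: eqP => // ej; case/eqP: nj; apply: val_inj.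
Qed.

Lemma genf_mem s x : x \in s -> genf s x.
Proof.
move=> xs; exists (fun k => ((k == index x s) : nat)%:R).
rewrite -[LHS](nth_index 0 xs) -(sum_delta (fun j => s`_j) (n:=size s) (i:=index x s) _) ?index_mem //.
  by apply: eq_bigr => i _; case: eqP => _; rewrite ?scale1r ?scale0r.
Qed.

Lemma submod_genf (P : V -> Prop) s v : is_submod P ->
  (forall x, x \in s -> P x) -> genf s v -> P v.
Proof.
case=> P0 [PD PZ] hs [c ->]; apply: (big_ind P) => // i _.
by apply: PZ; apply: hs; apply: mem_nth.
Qed.

Lemma is_submod_genf s : is_submod (genf s).
Proof. split; [exact: genf0 | split; [exact: genfD | exact: genfZ]]. Qed.

Lemma genf_sub s t v : {subset s <= t} -> genf s v -> genf t v.
Proof.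
move=> st; apply: submod_genf; first exact: is_submod_genf.
by move=> x /st; apply: genf_mem.
Qed.

Lemma genf_nil v : genf [::] v -> v = 0.
Proof. by case=> c ->; rewrite big_ord0. Qed.

Lemma genf_cons x s v : genf (x :: s) v <->
  exists a v0, genf s v0 /\ v = a *: x + v0.
Proof.
split.
- case=> c ->; rewrite big_ord_recl /=; exists (c 0%N),
    (\sum_(i < size s) c (bump 0 i) *: s`_i); split => //.
  by exists (fun i => c i.+1).
- case=> a [v0 [h ->]]; apply: genfD; first by apply: genfZ; apply: genf_mem; rewrite mem_head.
  by apply: genf_sub h => y ys; rewrite inE ys orbT.
Qed.

Lemma genf_pad t k : (size t <= k)%N ->
  exists t2 : seq V, size t2 = k /\ forall v, genf t2 v <-> genf t v.
Proof.
move=> le; exists (t ++ nseq (k - size t) 0); split.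
  by rewrite size_cat size_nseq subnKC.
move=> v; split.
- apply: submod_genf; first exact: is_submod_genf.
  move=> x; rewrite mem_cat => /orP [/genf_mem //|].
  by rewrite mem_nseq => /andP [_ /eqP ->]; apply: genf0.
- by apply: genf_sub => x xt; rewrite mem_cat xt.
Qed.

End Gen.

Lemma seq_choice (T U : Type) (dt : T) (d : U) (P : T -> U -> Prop) (l : seq T) :
  (forall i, (i < size l)%N -> exists y, P (nth dt l i) y) ->
  exists l' : seq U, size l' = size l /\ forall i, (i < size l)%N -> P (nth dt l i) (nth d l' i).
Proof.
elim: l => [|x l IH] h; first by exists [::].
have [l' [sz hl']] : exists l' : seq U, size l' = size l /\
   forall i, (i < size l)%N -> P (nth dt l i) (nth d l' i).
  by apply: IH => i lt; apply: (h i.+1).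
have [y hy] := h 0%N isT.
by exists (y :: l'); split; [rewrite /= sz | case].
Qed.

Lemma genf_map (R : nzRingType) (V W : lmodType R) (f : {linear V -> W}) s v :
  genf s v -> genf (map f s) (f v).
Proof.
case=> c ->; exists c; rewrite linear_sum size_map; apply: eq_bigr => i _.
by rewrite linearZ (nth_map 0).
Qed.

Lemma genf_map_inv (R : nzRingType) (V W : lmodType R) (f : {linear V -> W}) s w :
  genf (map f s) w -> exists v, genf s v /\ f v = w.
Proof.
case=> c ->; exists (\sum_(i < size s) c i *: s`_i); split; first by exists c.
rewrite linear_sum size_map; apply: eq_bigr => i _.
by rewrite linearZ (nth_map 0).
Qed.

Lemma noeth_fg (R : nzRingType) (V : lmodType R) (K : V -> Prop) :
  noetherian_ring R -> is_submod K -> forall s : seq V,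
  exists w : seq V, (forall x, x \in w -> K x) /\
    (forall v, genf w v <-> (genf s v /\ K v)).
Proof.
move=> [hN _] hK; have [K0 [KD KZ]] := hK.
elim=> [|x s [w' [w'K hw']]].
  exists [::]; split => // v; split; first by move=> /genf_nil ->; split => //; apply: genf0.
  by case=> /genf_nil -> _; apply: genf0.
pose I (a : R) := exists v, genf s v /\ K (a *: x + v).
have hI : is_left_ideal I.
  split; first by exists 0; split; [apply: genf0 | rewrite scale0r addr0].
  split.
  - move=> a b [v1 [g1 k1]] [v2 [g2 k2]]; exists (v1 + v2); split; first exact: genfD.
    by rewrite scalerDl addrACA; apply: KD.
  - move=> b a [v [g k]]; exists (b *: v); split; first exact: genfZ.
    by rewrite -scalerA -scalerDr; apply: KZ.
have [as_ has] := hN I hI.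
have Ias : forall i, (i < size as_)%N -> I as_`_i.
  move=> i lt; apply/has; exists (fun j : 'I__ => ((j : nat) == i)%:R).
  rewrite -(sum_delta (fun j => as_`_j) lt); apply: eq_bigr => j _.
  by case: eqP => _; rewrite ?mul1r ?mul0r.
have [vs [szvs hvs]] := @seq_choice _ _ 0 0 (fun a v => genf s v /\ K (a *: x + v)) as_ Ias.
pose gs := mkseq (fun i => as_`_i *: x + vs`_i) (size as_).
have gsK : forall y, y \in gs -> K y /\ genf (x :: s) y.
  move=> y /(nthP 0) [i]; rewrite size_mkseq => lt; rewrite nth_mkseq // => <-.
  have [g k] := hvs i lt; split => //.
  by apply/genf_cons; exists as_`_i, vs`_i.
exists (gs ++ w'); split.
  by move=> y; rewrite mem_cat => /orP [/gsK [] | /w'K].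
have subK : is_submod (fun v => genf (x :: s) v /\ K v).
  split; first by split => //; apply: genf0.
  split; first by move=> a b [? ?] [? ?]; split; [apply: genfD | apply: KD].
  by move=> a b [? ?]; split; [apply: genfZ | apply: KZ].
move=> v; split.
  apply: (submod_genf subK) => // y; rewrite mem_cat => /orP [/gsK [] //|yw].
  have [g k] := (hw' y).1 (genf_mem yw).
  split => //; apply: genf_sub g.
  by move=> z zs; rewrite inE zs orbT.
case=> /genf_cons [a [v0 [g0 ->]]] kv.
have : I a by exists v0.
move/has => [c ec].
pose y := \sum_(i < size as_) c i *: (as_`_i *: x + vs`_i).
have gy : genf gs y.
  apply: (@submod_genf _ _ _ gs _ (is_submod_genf gs)); last first.
    by exists (fun k => oapp c 0 (insub k)); rewrite /gs size_mkseq; apply: eq_bigr => i _;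
       rewrite valK /= nth_mkseq.
  by move=> z; apply: genf_mem.
have ey : y = a *: x + \sum_(i < size as_) c i *: vs`_i.
  rewrite /y ec scaler_suml -big_split; apply: eq_bigr => i _.
  by rewrite scalerDr scalerA.
have ky : K y by apply: (submod_genf hK) gy => z /gsK [].
have gd : genf w' (a *: x + v0 - y).
  apply/hw'; split.
    rewrite ey opprD addrACA subrr add0r; apply: genfB => //.
    apply: (@submod_genf _ _ _ vs _ (is_submod_genf s)); last first.
      exists (fun k => oapp c 0 (insub k)); rewrite szvs; apply: eq_bigr => i _; by rewrite valK.
    move=> z /(nthP 0) [i lt <-]; rewrite szvs in lt; exact: (hvs i lt).1.
  by apply: KD => //; rewrite -scaleN1r; apply: KZ.
rewrite -(subrK y (a *: x + v0)) ; apply: genfD.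
  by apply: genf_sub gd => z zs; rewrite mem_cat zs orbT.
by apply: genf_sub gy => z zs; rewrite mem_cat zs.
Qed.

Definition Qn (R : nzRingType) (V : lmodType R) (n : nat) :=
  forall s : seq V, exists t : seq V, size t = n /\ same_gen s t.

Lemma same_genE (R : nzRingType) (V : lmodType R) (s t : seq V) :
  same_gen s t <-> forall v, genf t v <-> genf s v.
Proof.
split=> h v; split.
- by move/genE/h/genE.
- by move/genE/h/genE.
- by move/genE/h/genE.
- by move/genE/h/genE.
Qed.

Lemma sr_exists (R : nzRingType) (V : lmodType R) n : Qn V n ->
  exists r, has_sr (fun _ : V => True) r /\ (r <= n)%N.
Proof.
elim: n => [|m IH] hQ.
  exists 0%N; split => //; split; first by move=> s _; apply: hQ.
  by exists [::]; split => // t _ h; exfalso; apply: h => z; rewrite in_nil.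
case: (classic (Qn V m)) => [hm | nm].
  by have [r [h le]] := IH hm; exists r; split => //; apply: leqW.
exists m.+1; split => //; split; first by move=> s _; apply: hQ.
have [s0 hs0] : exists s0 : seq V, forall t, size t = m -> ~ same_gen s0 t.
  apply: NNPP => ne; apply: nm => s; apply: NNPP => ne2; apply: ne; exists s.
  by move=> t st sg; apply: ne2; exists t.
have small : forall t2, same_gen s0 t2 -> (size (undup t2) <= m)%N -> False.
  move=> t2 sg le; have [t3 [sz h3]] := genf_pad le; apply: (hs0 t3 sz).
  apply/same_genE => v; rewrite h3; move/same_genE: sg => sg; rewrite -sg.
  by split; apply: genf_sub => z; rewrite mem_undup.
have [t [szt sgt]] := hQ s0.
have ut : uniq t.
  apply: contraTT isT => nu; exfalso; apply: (small t sgt).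
  have := uniq_size_uniq (undup_uniq t) (mem_undup t).
  rewrite (negbTE nu) => /esym/negbT ne; rewrite -ltnS -szt ltn_neqAle size_undup.
  by rewrite andbT eq_sym ne.
exists t; split => // t' sub nsub sg'.
apply: (small t').
  apply/same_genE => v; move/same_genE: sg' => sg'; move/same_genE: sgt => sgt.
  by rewrite sg' sgt.
rewrite leqNgt; apply/negP => lt; apply: nsub.
have sub2 : {subset undup t' <= t} by move=> z; rewrite mem_undup; apply: sub.
have le2 : (size t <= size (undup t'))%N by rewrite szt.
have [_ eqm] := uniq_min_size (undup_uniq t') sub2 le2.
by move=> z; rewrite -eqm mem_undup.
Qed.
Unset Implicit Arguments. Set Strict Implicit. Set Printing Implicit Defensive.

Theorem lemma2 (R : nzRingType) (A : lmodType R) (B : A -> Prop)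
    (C : lmodType R) (f : {linear A -> C}) :
  noetherian_ring R ->
  is_submod B ->
  (forall c : C, exists a : A, f a = c) ->
  (forall a : A, f a = 0 <-> B a) ->
  forall rB rC : nat, has_sr B rB -> has_sr (fun _ : C => True) rC ->
  exists rA : nat, has_sr (fun _ : A => True) rA /\ (rA <= rB + rC)%N.
Proof.
move=> hN hB _ hker rB rC [hB1 _] [hC1 _].
apply: sr_exists => s.
have [t' [szt' sgt']] := hC1 (map f s) (fun _ _ => I).
move/same_genE: sgt' => sgt'.
have ht' : forall j, (j < size t')%N -> exists u, genf s u /\ f u = t'`_j.
  move=> j lt; apply: genf_map_inv; apply/sgt'; apply: genf_mem; exact: mem_nth.
have [u [szu hu]] := @seq_choice _ _ 0 0 (fun c u => genf s u /\ f u = c) t' ht'.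
have mu : map f u = t'.
  apply: (@eq_from_nth _ 0); first by rewrite size_map.
  by move=> i; rewrite size_map szu => lt; rewrite (nth_map 0) ?szu // (hu i lt).2.
have [w [wB hw]] := noeth_fg hN hB s.
have [tB [sztB sgtB]] := hB1 w wB.
move/same_genE: sgtB => sgtB.
exists (u ++ tB); split; first by rewrite size_cat szu szt' sztB addnC.
apply/same_genE => v; split.
  apply: (@submod_genf _ _ _ _ _ (is_submod_genf s)) => z.
  rewrite mem_cat => /orP [/(nthP 0) [i lt <-]| ztB].
    by rewrite szu in lt; exact: (hu i lt).1.
  by have [] := (hw z).1 ((sgtB z).1 (genf_mem ztB)).
move=> gv.
have := genf_map f gv; move/sgt'; rewrite -mu => /genf_map_inv [y [gy fy]].
have gys : genf s y.
  apply: (@submod_genf _ _ _ _ _ (is_submod_genf s)) gy => z /(nthP 0) [i lt <-].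
  by rewrite szu in lt; exact: (hu i lt).1.
have bd : B (v - y) by apply/hker; rewrite linearB /= fy subrr.
have gd : genf tB (v - y) by apply/sgtB/hw; split => //; apply: genfB.
rewrite -(subrK y v) addrC; apply: genfD.
  by apply: genf_sub gy => z zs; rewrite mem_cat zs.
by apply: genf_sub gd => z zs; rewrite mem_cat zs orbT.
Qed.
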